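(* Let $z_\alpha,z_\beta$ be the upper $\alpha$ and $\beta$ quantiles of the standard normal distribution, with $0<\alpha,\beta<1/2$. Let $\theta=(p_1^{(0)},p_2^{(0)})$ with $0<p_k^{(0)}<1/2$, and $\lambda=(\delta_1,\delta_2)$ with $\delta_k<0$ and $p_k^{(0)}+\delta_k>0$ ($k=1,2$); write $q_k^{(0)}=1-p_k^{(0)}$. For a correlation value $\rho$ define $$p_*^{(0)}(\theta,\rho)=1-q_1^{(0)}q_2^{(0)}-\rho\sqrt{p_1^{(0)}p_2^{(0)}q_1^{(0)}q_2^{(0)}},$$ $$\delta_*(\theta,\lambda,\rho)=\delta_1q_2^{(0)}+\delta_2q_1^{(0)}-\delta_1\delta_2+\rho\sqrt{p_1^{(0)}p_2^{(0)}q_1^{(0)}q_2^{(0)}}-\rho\sqrt{(p_1^{(0)}+\delta_1)(p_2^{(0)}+\delta_2)(q_1^{(0)}-\delta_1)(q_2^{(0)}-\delta_2)},$$ and $$n(\theta,\lambda,\rho)=\frac{2(z_\alpha+z_\beta)^2\Big(p_*^{(0)}(1-p_*^{(0)})+(p_*^{(0)}+\delta_* )(1-p_*^{(0)}-\delta_* )\Big)}{\delta_*^2},$$ where $p_*^{(0)}=p_*^{(0)}(\theta,\rho)$, $\delta_*=\delta_*(\theta,\lambda,\rho)$. Then, for fixed $\theta$ and $\lambda$, $n(\theta,\lambda,\rho)$ is an increasing function of $\rho$ on the interval of admissible correlation values $\rho\in[B_L(\theta,\lambda),B_U(\theta,\lambda)]$, where $$B_L=\max\left\{-\sqrt{\tfrac{p_1^{(0)}p_2^{(0)}}{q_1^{(0)}q_2^{(0)}}},\,-\sqrt{\tfrac{q_1^{(0)}q_2^{(0)}}{p_1^{(0)}p_2^{(0)}}},\,-\sqrt{\tfrac{(p_1^{(0)}+\delta_1)(p_2^{(0)}+\delta_2)}{(q_1^{(0)}-\delta_1)(q_2^{(0)}-\delta_2)}},\,-\sqrt{\tfrac{(q_1^{(0)}-\delta_1)(q_2^{(0)}-\delta_2)}{(p_1^{(0)}+\delta_1)(p_2^{(0)}+\delta_2)}}\right\},$$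 $$B_U=\min\left\{\sqrt{\tfrac{p_1^{(0)}q_2^{(0)}}{p_2^{(0)}q_1^{(0)}}},\,\sqrt{\tfrac{p_2^{(0)}q_1^{(0)}}{p_1^{(0)}q_2^{(0)}}},\,\sqrt{\tfrac{(p_1^{(0)}+\delta_1)(q_2^{(0)}-\delta_2)}{(p_2^{(0)}+\delta_2)(q_1^{(0)}-\delta_1)}},\,\sqrt{\tfrac{(p_2^{(0)}+\delta_2)(q_1^{(0)}-\delta_1)}{(p_1^{(0)}+\delta_1)(q_2^{(0)}-\delta_2)}}\right\}.$$ In particular $n(\theta,\lambda,B_L)\le n(\theta,\lambda,\rho)\le n(\theta,\lambda,B_U)$ for all admissible $\rho$.
   Context: Setting: two-arm balanced trial (control group 0, treatment group 1) whose primary endpoint is a composite binary endpoint, defined as the occurrence of at least one of two binary events. $p_k^{(0)}$ are the control-group event rates of the components, $p_k^{(0)}+\delta_k$ the treatment-group rates, and $\rho$ is the Pearson correlation between the two component indicators, assumed equal in both groups; $B_L,B_U$ are the bounds within which such a common correlation is attainable in both groups. $p_*^{(0)}(\theta,\rho)$ is the composite event probability in the control group, $\delta_*(\theta,\lambda,\rho)$ the composite risk difference, and $n(\theta,\lambda,\rho)$ the total sample size for a one-sided test of $H_0:\delta_*=0$ vs $H_1:\delta_*<0$ at level $\alpha$ with power $1-\beta$ using the unpooled variance estimate. *)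

(* Defs.v *)
From Stdlib Require Import Reals.
Open Scope R_scope.

Definition std_normal_pdf (x : R) : R := exp (- (x ^ 2) / 2) / sqrt (2 * PI).

(* Phi is the standard normal CDF: Phi(x) = int_{-oo}^x pdf, characterised by
   Phi' = pdf everywhere and Phi(x) -> 0 as x -> -oo. *)
Definition is_std_normal_cdf (Phi : R -> R) : Prop :=
  (forall x, derivable_pt_lim Phi x (std_normal_pdf x)) /\
  (forall eps, 0 < eps -> exists M, forall x, x < M -> Rabs (Phi x) < eps).

Definition is_upper_quantile (Phi : R -> R) (a z : R) : Prop := Phi z = 1 - a.

Section Defs.
Variables (p1 p2 d1 d2 : R).
Let q1 := 1 - p1.
Let q2 := 1 - p2.

Definition p_star0 (rho : R) : R :=
  1 - q1 * q2 - rho * sqrt (p1 * p2 * q1 * q2).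

Definition delta_star (rho : R) : R :=
  d1 * q2 + d2 * q1 - d1 * d2 + rho * sqrt (p1 * p2 * q1 * q2)
  - rho * sqrt ((p1 + d1) * (p2 + d2) * (q1 - d1) * (q2 - d2)).

Definition sample_size (za zb rho : R) : R :=
  let ps := p_star0 rho in
  let ds := delta_star rho in
  2 * (za + zb) ^ 2 * (ps * (1 - ps) + (ps + ds) * (1 - ps - ds)) / ds ^ 2.

Definition B_L : R :=
  Rmax (Rmax (- sqrt (p1 * p2 / (q1 * q2))) (- sqrt (q1 * q2 / (p1 * p2))))
       (Rmax (- sqrt ((p1 + d1) * (p2 + d2) / ((q1 - d1) * (q2 - d2))))
             (- sqrt ((q1 - d1) * (q2 - d2) / ((p1 + d1) * (p2 + d2))))).

Definition B_U : R :=
  Rmin (Rmin (sqrt (p1 * q2 / (p2 * q1))) (sqrt (p2 * q1 / (p1 * q2))))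
       (Rmin (sqrt ((p1 + d1) * (q2 - d2) / ((p2 + d2) * (q1 - d1))))
             (sqrt ((p2 + d2) * (q1 - d1) / ((p1 + d1) * (q2 - d2))))).
End Defs.

(* Main.v *)
Require Import Defs.
From Coquelicot Require Import Coquelicot.
From Stdlib Require Import Reals Lra Psatz.
Open Scope R_scope.


Lemma sq_lt (u v : R) : 0 <= u -> 0 <= v -> v * v < u * u -> v < u.
Proof. intros; nra. Qed.

Lemma sq_le (u v : R) : 0 <= u -> 0 <= v -> v * v <= u * u -> v <= u.
Proof. intros; nra. Qed.

Lemma single (p P s t W g : R) :
  0 < P -> P < p -> p < 1/2 -> s * s = p * (1 - p) -> 0 <= s ->
  t * t = P * (1 - P) -> 0 <= t -> 0 <= W -> W <= 1 - p - P ->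
  0 <= g -> g <= 1 ->
  0 < (1 + W) * (s - t) - 2 * W * g * (s * (1 - P) - t * (1 - p)).
Proof.
  intros HP HPp Hp Hs Hs0 Ht Ht0 HW HW0 Hg Hg1.
  assert (hst : t < s).
  { apply sq_lt; auto. rewrite Hs, Ht. nra. }
  assert (hQ : t * (1 - p) <= s * (1 - P)).
  { apply sq_le; [nra|nra|].
    replace (t * (1 - p) * (t * (1 - p))) with ((t*t) * ((1-p)*(1-p))) by ring.
    replace (s * (1 - P) * (s * (1 - P))) with ((s*s) * ((1-P)*(1-P))) by ring.
    rewrite Hs, Ht.
    assert (0 <= (1-p)*(1-P)*(p-P)) by (apply Rmult_le_pos; [apply Rmult_le_pos|]; lra).
    nra. }
  set (c1 := p + 3 * P - 2 * p * P - 2 * P * P).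
  set (c2 := 3 * p + P - 2 * p * p - 2 * p * P).
  assert (hc1 : 0 < c1) by (unfold c1; nra).
  assert (hc2 : 0 < c2) by (unfold c2; nra).
  assert (hE : t * c2 < s * c1).
  { apply sq_lt; [nra|nra|].
    replace (t * c2 * (t * c2)) with ((t*t) * (c2*c2)) by ring.
    replace (s * c1 * (s * c1)) with ((s*s) * (c1*c1)) by ring.
    rewrite Hs, Ht.
    assert (Hid : p * (1 - p) * (c1 * c1) - P * (1 - P) * (c2 * c2)
                  = (p - P) ^ 3 * (1 - p - P)) by (unfold c1, c2; ring).
    assert (0 < (p - P) ^ 3 * (1 - p - P)).
    { apply Rmult_lt_0_compat. apply pow_lt. lra. lra. }
    lra. }
  set (W0 := 1 - p - P).
  assert (HL0 : (2 - p - P) * (s - t) - 2 * W0 * (s * (1 - P) - t * (1 - p))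
                = s * c1 - t * c2) by (unfold W0, c1, c2; ring).
  set (L := (1 + W) * (s - t) - 2 * W * (s * (1 - P) - t * (1 - p))).
  assert (HW0L : W0 * L = (W0 - W) * (s - t) + W * (s * c1 - t * c2))
    by (unfold L, W0; rewrite <- HL0; unfold W0; ring).
  assert (HW0p : 0 < W0) by (unfold W0; lra).
  assert (HLp : 0 < L).
  { assert (0 < W0 * L).
    { rewrite HW0L. fold W0 in HW0.
      destruct (Rle_lt_or_eq_dec 0 W HW) as [HWp | HWe].
      - assert (0 <= (W0 - W) * (s - t)) by nra.
        assert (0 < W * (s * c1 - t * c2)) by nra. lra.
      - subst W. nra. }
    nra. }
  assert (2 * W * g * (s * (1 - P) - t * (1 - p)) <= 2 * W * (s * (1 - P) - t * (1 - p))).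
  { assert (0 <= 2 * W * (s * (1 - P) - t * (1 - p))) by nra. nra. }
  unfold L in HLp. lra.
Qed.

Lemma key (p1 p2 P1 P2 s1 s2 t1 t2 W : R) :
  0 < P1 -> P1 < p1 -> p1 < 1/2 -> 0 < P2 -> P2 < p2 -> p2 < 1/2 ->
  s1 * s1 = p1 * (1 - p1) -> 0 <= s1 -> s2 * s2 = p2 * (1 - p2) -> 0 <= s2 ->
  t1 * t1 = P1 * (1 - P1) -> 0 <= t1 -> t2 * t2 = P2 * (1 - P2) -> 0 <= t2 ->
  0 <= W -> W <= 1 - p1 - P1 -> W <= 1 - p2 - P2 ->
  0 < (s1 * s2) * (1 + W - 2 * W * ((1 - P1) * (1 - P2)))
      - (t1 * t2) * (1 + W - 2 * W * ((1 - p1) * (1 - p2))).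
Proof.
  intros.
  assert (B1 := single p1 P1 s1 t1 W (1 - P2) ltac:(lra) ltac:(lra) ltac:(lra)
     ltac:(assumption) ltac:(assumption) ltac:(assumption) ltac:(assumption)
     ltac:(lra) ltac:(lra) ltac:(lra) ltac:(lra)).
  assert (B2 := single p2 P2 s2 t2 W (1 - p1) ltac:(lra) ltac:(lra) ltac:(lra)
     ltac:(assumption) ltac:(assumption) ltac:(assumption) ltac:(assumption)
     ltac:(lra) ltac:(lra) ltac:(lra) ltac:(lra)).
  assert (hs2 : 0 < s2) by nra.
  assert (ht1 : 0 < t1) by nra.
  replace ((s1 * s2) * (1 + W - 2 * W * ((1 - P1) * (1 - P2)))
      - (t1 * t2) * (1 + W - 2 * W * ((1 - p1) * (1 - p2))))
  with (s2 * ((1 + W) * (s1 - t1) - 2 * W * (1 - P2) * (s1 * (1 - P1) - t1 * (1 - p1)))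
        + t1 * ((1 + W) * (s2 - t2) - 2 * W * (1 - p1) * (s2 * (1 - P2) - t2 * (1 - p2))))
  by ring.
  apply Rplus_lt_0_compat; apply Rmult_lt_0_compat; assumption.
Qed.

Lemma core (p1 p2 P1 P2 s1 s2 t1 t2 r : R) :
  0 < P1 -> P1 < p1 -> p1 < 1/2 -> 0 < P2 -> P2 < p2 -> p2 < 1/2 ->
  s1 * s1 = p1 * (1 - p1) -> 0 <= s1 -> s2 * s2 = p2 * (1 - p2) -> 0 <= s2 ->
  t1 * t1 = P1 * (1 - P1) -> 0 <= t1 -> t2 * t2 = P2 * (1 - P2) -> 0 <= t2 ->
  r * (s1 * s2) <= p1 * (1 - p2) -> r * (s1 * s2) <= p2 * (1 - p1) ->
  r * (t1 * t2) <= P1 * (1 - P2) -> r * (t1 * t2) <= P2 * (1 - P1) ->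
  - (p1 * p2) <= r * (s1 * s2) -> - (P1 * P2) <= r * (t1 * t2) ->
  let a := s1 * s2 in let b := t1 * t2 in
  let x := 1 - (1 - p1) * (1 - p2) - r * a in
  let y := 1 - (1 - P1) * (1 - P2) - r * b in
  0 < x - y /\ 0 < (a - b) * (x + y) + 2 * (1 - x - y) * (a * y - b * x).
Proof.
  intros HP1 HP1p Hp1 HP2 HP2p Hp2 Hs1 Hs10 Hs2 Hs20 Ht1 Ht10 Ht2 Ht20
    h1 h2 h3 h4 h5 h6 a b x y.
  assert (hst1 : t1 < s1) by (apply sq_lt; [lra|lra|]; rewrite Hs1, Ht1; nra).
  assert (hst2 : t2 < s2) by (apply sq_lt; [lra|lra|]; rewrite Hs2, Ht2; nra).
  assert (hs1 : 0 < s1) by lra. assert (hs2 : 0 < s2) by lra.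
  assert (hab : b < a) by (unfold a, b; nra).
  assert (hb0 : 0 <= b) by (unfold b; nra).
  split.
  -
    unfold x, y.
    destruct (Rle_or_lt r 0) as [hr | hr].
    + assert (r * a <= r * b) by nra. nra.
    +
      set (d1 := p1 - P1). set (d2 := p2 - P2).
      assert (e1 : r * s2 * (s1 - t1) * (p1 * (1 - p1)) <= (1 - p2) * p1 * (d1 * (1 - p1 - P1))).
      { assert (E1 : r * s2 * (s1 - t1) * (s1 * s1) <= r * s2 * s1 * ((s1 - t1) * (s1 + t1))).
        { assert (0 <= r * s2 * (s1 - t1) * s1 * t1) by
            (repeat apply Rmult_le_pos; lra).
          nra. }
        assert (E2 : (s1 - t1) * (s1 + t1) = d1 * (1 - p1 - P1)).
        { replace ((s1 - t1) * (s1 + t1)) with (s1 * s1 - t1 * t1) by ring.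
          rewrite Hs1, Ht1. unfold d1. ring. }
        rewrite E2 in E1. rewrite Hs1 in E1.
        assert (0 <= d1 * (1 - p1 - P1)) by (unfold d1; nra).
        unfold a in h1.
        assert (r * s2 * s1 * (d1 * (1 - p1 - P1)) <= p1 * (1 - p2) * (d1 * (1 - p1 - P1))).
        { replace (r * s2 * s1) with (r * (s1 * s2)) by ring. nra. }
        lra. }
      assert (e2 : r * s1 * (s2 - t2) * (p2 * (1 - p2)) <= (1 - p1) * p2 * (d2 * (1 - p2 - P2))).
      { assert (E1 : r * s1 * (s2 - t2) * (s2 * s2) <= r * s1 * s2 * ((s2 - t2) * (s2 + t2))).
        { assert (0 <= r * s1 * (s2 - t2) * s2 * t2) by
            (repeat apply Rmult_le_pos; lra).
          nra. }
        assert (E2 : (s2 - t2) * (s2 + t2) = d2 * (1 - p2 - P2)).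
        { replace ((s2 - t2) * (s2 + t2)) with (s2 * s2 - t2 * t2) by ring.
          rewrite Hs2, Ht2. unfold d2. ring. }
        rewrite E2 in E1. rewrite Hs2 in E1.
        assert (0 <= d2 * (1 - p2 - P2)) by (unfold d2; nra).
        assert (r * s1 * s2 * (d2 * (1 - p2 - P2)) <= p2 * (1 - p1) * (d2 * (1 - p2 - P2))).
        { replace (r * s1 * s2) with (r * (s1 * s2)) by ring. nra. }
        lra. }
      assert (f1 : r * s2 * (s1 - t1) * (1 - p1) <= (1 - p2) * (d1 * (1 - p1 - P1))).
      { apply (Rmult_le_reg_l p1); [lra|]. nra. }
      assert (f2 : r * s1 * (s2 - t2) * (1 - p2) <= (1 - p1) * (d2 * (1 - p2 - P2))).
      { apply (Rmult_le_reg_l p2); [lra|]. nra. }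
      assert (g1 : r * s2 * (s1 - t1) < d1 * (1 - P2)).
      { apply (Rmult_lt_reg_r (1 - p1)); [lra|].
        assert ((1 - p2) * (d1 * (1 - p1 - P1)) < d1 * (1 - P2) * (1 - p1)).
        { assert (0 < d1) by (unfold d1; lra).
          assert ((1 - p2) * (1 - p1 - P1) < (1 - P2) * (1 - p1)) by nra.
          nra. }
        lra. }
      assert (g2 : r * s1 * (s2 - t2) <= d2 * (1 - p1)).
      { apply (Rmult_le_reg_r (1 - p2)); [lra|].
        assert ((1 - p1) * (d2 * (1 - p2 - P2)) <= d2 * (1 - p1) * (1 - p2)).
        { assert (0 < d2) by (unfold d2; lra).
          assert ((1 - p1) * (1 - p2 - P2) <= (1 - p1) * (1 - p2)) by nra.
          nra. }
        lra. }
      assert (hab2 : r * (a - b) <= r * s2 * (s1 - t1) + r * s1 * (s2 - t2)).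
      { unfold a, b. assert (0 <= r * ((s1 - t1) * (s2 - t2))) by
          (apply Rmult_le_pos; [lra|]; apply Rmult_le_pos; lra).
        nra. }
      assert (Hid : (1 - (1 - p1) * (1 - p2) - r * a) - (1 - (1 - P1) * (1 - P2) - r * b)
                    = d1 * (1 - P2) + d2 * (1 - p1) - r * (a - b)) by (unfold d1, d2; ring).
      rewrite Hid. lra.
  -
    assert (hxp1 : p1 <= x) by (unfold x, a; nra).
    assert (hxp2 : p2 <= x) by (unfold x, a; nra).
    assert (hyP1 : P1 <= y) by (unfold y, b; nra).
    assert (hyP2 : P2 <= y) by (unfold y, b; nra).
    assert (hx1 : x < 1) by (unfold x, a; nra).
    assert (hy1 : y < 1) by (unfold y, b; nra).
    destruct (Rlt_or_le (x + y) 1) as [hS | hS].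
    + set (W := 1 - (x + y)).
      assert (K := key p1 p2 P1 P2 s1 s2 t1 t2 W HP1 HP1p Hp1 HP2 HP2p Hp2
                Hs1 Hs10 Hs2 Hs20 Ht1 Ht10 Ht2 Ht20
                ltac:(unfold W; lra) ltac:(unfold W; lra) ltac:(unfold W; lra)).
      assert (Hid : (a - b) * (x + y) + 2 * (1 - x - y) * (a * y - b * x)
         = (s1 * s2) * (1 + W - 2 * W * ((1 - P1) * (1 - P2)))
           - (t1 * t2) * (1 + W - 2 * W * ((1 - p1) * (1 - p2))))
        by (unfold W, x, y, a, b; ring).
      rewrite Hid; exact K.
    + set (K := a * y - b * x).
      assert (hK : a - b - K > 0).
      { unfold K, x, y.
        replace (a - b - (a * (1 - (1 - P1) * (1 - P2) - r * b) - b * (1 - (1 - p1) * (1 - p2) - r * a)))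
          with (a * ((1 - P1) * (1 - P2)) - b * ((1 - p1) * (1 - p2))) by ring.
        assert ((1 - p1) * (1 - p2) < (1 - P1) * (1 - P2)) by nra.
        assert (0 < (1 - p1) * (1 - p2)) by nra.
        nra. }
      destruct (Rle_or_lt 0 K) as [hK0 | hK0].
      * replace ((a - b) * (x + y) + 2 * (1 - x - y) * (a * y - b * x))
          with ((2 - (x + y)) * K + (x + y) * (a - b - K)) by (unfold K; ring).
        nra.
      * replace ((a - b) * (x + y) + 2 * (1 - x - y) * (a * y - b * x))
          with (2 * K * (1 - (x + y)) + (a - b) * (x + y)) by (unfold K; ring).
        nra.
Qed.

Lemma hb (u v r : R) : 0 < v -> 0 <= u -> r <= sqrt (u / v) -> r * sqrt (u * v) <= u.
Proof.
  intros hv hu hr.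
  destruct (Rle_or_lt r 0) as [h|h].
  - assert (0 <= sqrt (u * v)) by apply sqrt_pos. nra.
  - assert (r * sqrt (u * v) <= sqrt (u / v) * sqrt (u * v)).
    { apply Rmult_le_compat_r; [apply sqrt_pos|exact hr]. }
    rewrite <- sqrt_mult_alt in H.
    + replace (u / v * (u * v)) with (u * u) in H by (field; lra).
      rewrite sqrt_square in H; lra.
    + apply Rmult_le_pos; [lra|]. apply Rlt_le, Rinv_0_lt_compat; lra.
Qed.

Lemma hl (u v r : R) : 0 < v -> 0 <= u -> - sqrt (u / v) <= r -> - u <= r * sqrt (u * v).
Proof.
  intros hv hu hr.
  assert (H := hb u v (- r) hv hu ltac:(lra)). lra.
Qed.

Lemma ident (a b xs ys s r : R) :
  let xr := xs + (s - r) * a in let yr := ys + (s - r) * b in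
  xr - yr <> 0 -> xs - ys <> 0 ->
  (xs * (1 - xs) + ys * (1 - ys)) / (ys - xs) ^ 2
  - (xr * (1 - xr) + yr * (1 - yr)) / (yr - xr) ^ 2
  = (s - r) * ((xs - ys) * ((a - b) * (xr + yr) + 2 * (1 - xr - yr) * (a * yr - b * xr))
             + (xr - yr) * ((a - b) * (xs + ys) + 2 * (1 - xs - ys) * (a * ys - b * xs)))
    / (2 * (xr - yr) ^ 2 * (xs - ys) ^ 2).
Proof.
  intros xr yr h1 h2. unfold xr, yr in *.
  field. repeat split; intro; [apply h1|apply h1|apply h2|apply h2]; lra.
Qed.

Section Main.
Variables (za zb p1 p2 d1 d2 : R).
Hypotheses (Hz : za + zb <> 0) (Hp1 : 0 < p1 < 1/2) (Hp2 : 0 < p2 < 1/2)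
  (Hd1 : d1 < 0) (Hd2 : d2 < 0) (HP1 : 0 < p1 + d1) (HP2 : 0 < p2 + d2).

Let s1 := sqrt (p1 * (1 - p1)).
Let s2 := sqrt (p2 * (1 - p2)).
Let t1 := sqrt ((p1 + d1) * (1 - (p1 + d1))).
Let t2 := sqrt ((p2 + d2) * (1 - (p2 + d2))).

Let Ea : sqrt (p1 * p2 * (1 - p1) * (1 - p2)) = s1 * s2.
Proof.
  unfold s1, s2. rewrite <- sqrt_mult_alt by nra. f_equal; ring.
Qed.

Let Eb : sqrt ((p1 + d1) * (p2 + d2) * ((1 - p1) - d1) * ((1 - p2) - d2)) = t1 * t2.
Proof.
  unfold t1, t2. rewrite <- sqrt_mult_alt by nra. f_equal; ring.
Qed.

Let X rho := p_star0 p1 p2 rho.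
Let Y rho := p_star0 p1 p2 rho + delta_star p1 p2 d1 d2 rho.

Let EX rho : X rho = 1 - (1 - p1) * (1 - p2) - rho * (s1 * s2).
Proof. unfold X, p_star0. rewrite Ea. ring. Qed.

Let EY rho : Y rho = 1 - (1 - (p1 + d1)) * (1 - (p2 + d2)) - rho * (t1 * t2).
Proof. unfold Y, p_star0, delta_star. rewrite Ea, Eb. ring. Qed.

Let ES rho : sample_size p1 p2 d1 d2 za zb rho =
  2 * (za + zb) ^ 2 * ((X rho * (1 - X rho) + Y rho * (1 - Y rho)) / (Y rho - X rho) ^ 2).
Proof.
  assert (E : Y rho - X rho = delta_star p1 p2 d1 d2 rho) by (unfold X, Y; ring).
  rewrite E. unfold sample_size, X, Y. cbv zeta.
  unfold Rdiv. ring.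
Qed.

Let adm rho : B_L p1 p2 d1 d2 <= rho -> rho <= B_U p1 p2 d1 d2 ->
  0 < X rho - Y rho /\
  0 < (s1 * s2 - t1 * t2) * (X rho + Y rho)
      + 2 * (1 - X rho - Y rho) * ((s1 * s2) * Y rho - (t1 * t2) * X rho).
Proof.
  intros hL hU.
  unfold B_L, B_U in hL, hU.
  set (P1 := p1 + d1) in *. set (P2 := p2 + d2) in *.
  assert (hq1 : 0 < 1 - p1) by lra. assert (hq2 : 0 < 1 - p2) by lra.
  assert (hQ1 : 0 < 1 - p1 - d1) by lra. assert (hQ2 : 0 < 1 - p2 - d2) by lra.
  assert (u1 : rho <= sqrt (p1 * (1 - p2) / (p2 * (1 - p1)))).
  { eapply Rle_trans; [exact hU|]. eapply Rle_trans; apply Rmin_l. }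
  assert (u2 : rho <= sqrt (p2 * (1 - p1) / (p1 * (1 - p2)))).
  { eapply Rle_trans; [exact hU|]. eapply Rle_trans; [apply Rmin_l|apply Rmin_r]. }
  assert (u3 : rho <= sqrt (P1 * ((1 - p2) - d2) / (P2 * ((1 - p1) - d1)))).
  { eapply Rle_trans; [exact hU|]. eapply Rle_trans; [apply Rmin_r|apply Rmin_l]. }
  assert (u4 : rho <= sqrt (P2 * ((1 - p1) - d1) / (P1 * ((1 - p2) - d2)))).
  { eapply Rle_trans; [exact hU|]. eapply Rle_trans; apply Rmin_r. }
  assert (l1 : - sqrt (p1 * p2 / ((1 - p1) * (1 - p2))) <= rho).
  { eapply Rle_trans; [|exact hL]. eapply Rle_trans; [|apply Rmax_l]. apply Rmax_l. }
  assert (l3 : - sqrt (P1 * P2 / (((1 - p1) - d1) * ((1 - p2) - d2))) <= rho).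
  { eapply Rle_trans; [|exact hL]. eapply Rle_trans; [|apply Rmax_r]. apply Rmax_l. }
  apply hb in u1; [|nra|nra]. apply hb in u2; [|nra|nra].
  apply hb in u3; [|unfold P1, P2 in *; nra|unfold P1, P2 in *; nra].
  apply hb in u4; [|unfold P1, P2 in *; nra|unfold P1, P2 in *; nra].
  apply hl in l1; [|nra|nra].
  apply hl in l3; [|unfold P1, P2 in *; nra|unfold P1, P2 in *; nra].
  replace (p1 * (1 - p2) * (p2 * (1 - p1))) with (p1 * p2 * (1 - p1) * (1 - p2)) in u1 by ring.
  replace (p2 * (1 - p1) * (p1 * (1 - p2))) with (p1 * p2 * (1 - p1) * (1 - p2)) in u2 by ring.
  replace (p1 * p2 * ((1 - p1) * (1 - p2))) with (p1 * p2 * (1 - p1) * (1 - p2)) in l1 by ring.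
  replace (P1 * ((1 - p2) - d2) * (P2 * ((1 - p1) - d1)))
    with (P1 * P2 * ((1 - p1) - d1) * ((1 - p2) - d2)) in u3 by (unfold P1, P2; ring).
  replace (P2 * ((1 - p1) - d1) * (P1 * ((1 - p2) - d2)))
    with (P1 * P2 * ((1 - p1) - d1) * ((1 - p2) - d2)) in u4 by (unfold P1, P2; ring).
  replace (P1 * P2 * (((1 - p1) - d1) * ((1 - p2) - d2)))
    with (P1 * P2 * ((1 - p1) - d1) * ((1 - p2) - d2)) in l3 by (unfold P1, P2; ring).
  rewrite Ea in u1, u2, l1. rewrite Eb in u3, u4, l3.
  rewrite !EX, !EY.
  assert (Hs1 : s1 * s1 = p1 * (1 - p1)) by (unfold s1; apply sqrt_sqrt; nra).
  assert (Hs2 : s2 * s2 = p2 * (1 - p2)) by (unfold s2; apply sqrt_sqrt; nra).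
  assert (Ht1 : t1 * t1 = P1 * (1 - P1)) by (unfold t1; apply sqrt_sqrt; apply Rmult_le_pos; unfold P1 in *; lra).
  assert (Ht2 : t2 * t2 = P2 * (1 - P2)) by (unfold t2; apply sqrt_sqrt; apply Rmult_le_pos; unfold P2 in *; lra).
  assert (C := core p1 p2 P1 P2 s1 s2 t1 t2 rho ltac:(unfold P1, P2 in *; lra) ltac:(unfold P1, P2 in *; lra)
     ltac:(lra) ltac:(unfold P1, P2 in *; lra) ltac:(unfold P1, P2 in *; lra) ltac:(lra)
     Hs1 ltac:(apply sqrt_pos) Hs2 ltac:(apply sqrt_pos) Ht1 ltac:(apply sqrt_pos)
     Ht2 ltac:(apply sqrt_pos)
     ltac:(lra) ltac:(lra)
     ltac:(replace (P1 * (1 - P2)) with (P1 * ((1 - p2) - d2)) by (unfold P2; ring); lra)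
     ltac:(replace (P2 * (1 - P1)) with (P2 * ((1 - p1) - d1)) by (unfold P1; ring); lra)
     ltac:(lra) ltac:(lra)).
  simpl in C. exact C.
Qed.

Lemma mainB : forall r s,
     B_L p1 p2 d1 d2 <= r -> r < s -> s <= B_U p1 p2 d1 d2 ->
     sample_size p1 p2 d1 d2 za zb r < sample_size p1 p2 d1 d2 za zb s.
Proof.
  intros r s hL hrs hU.
  destruct (adm r hL ltac:(lra)) as [Dr gr].
  destruct (adm s ltac:(lra) hU) as [Ds gs].
  rewrite !ES.
  assert (hc : 0 < 2 * (za + zb) ^ 2).
  { assert (0 < (za + zb) ^ 2) by (simpl; rewrite Rmult_1_r; apply Rsqr_pos_lt; exact Hz). lra. }
  apply Rmult_lt_compat_l; [exact hc|].
  assert (xr : X r = X s + (s - r) * (s1 * s2)) by (rewrite !EX; ring).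
  assert (yr : Y r = Y s + (s - r) * (t1 * t2)) by (rewrite !EY; ring).
  assert (I := ident (s1 * s2) (t1 * t2) (X s) (Y s) s r).
  cbv zeta in I. rewrite <- xr, <- yr in I.
  specialize (I ltac:(lra) ltac:(lra)).
  apply Rminus_gt_0_lt. rewrite I.
  apply Rdiv_lt_0_compat.
  - apply Rmult_lt_0_compat; [lra|].
    apply Rplus_lt_0_compat; apply Rmult_lt_0_compat; assumption.
  - assert (0 < (X r - Y r) ^ 2) by (apply pow_lt; lra).
    assert (0 < (X s - Y s) ^ 2) by (apply pow_lt; lra).
    nra.
Qed.

End Main.

Lemma const_of_d0 (f : R -> R) : (forall x, derivable_pt_lim f x 0) -> forall x y, f x = f y.
Proof.
  intros H.
  assert (pr : derivable f) by (intro x; exact (exist _ 0 (H x))).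
  assert (G : forall a b, a < b -> f a = f b).
  { intros a b hab.
    destruct (MVT_cor1 f a b (fun x => exist _ 0 (H x)) hab) as [c [hc _]].
    simpl in hc. lra. }
  intros x y. destruct (Rtotal_order x y) as [h|[h|h]].
  - apply G; exact h.
  - subst; reflexivity.
  - symmetry; apply G; exact h.
Qed.

Lemma mono_of_d (f df : R -> R) : (forall x, derivable_pt_lim f x (df x)) ->
  (forall x, 0 <= df x) -> forall x y, x <= y -> f x <= f y.
Proof.
  intros H Hd x y hxy.
  destruct (Rle_lt_or_eq_dec x y hxy) as [h|h]; [|subst; lra].
  destruct (MVT_cor1 f x y (fun z => exist _ (df z) (H z)) h) as [c [hc _]].
  simpl in hc. specialize (Hd c). nra.
Qed.

Definition gs (x : R) := exp (- (x * x) / 2).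
Definition J (t : R) := RInt gs 0 t.
Definition fK (t u : R) := exp (- (t * t * (1 + u * u)) / 2) / (1 + u * u).
Definition K (t : R) := RInt (fK t) 0 1.

Lemma gs_cont x : continuous gs x.
Proof. apply (ex_derive_continuous (K := R_AbsRing) (V := R_NormedModule)). unfold gs. auto_derive. exact I. Qed.

Lemma gs_exRInt a b : ex_RInt gs a b.
Proof. apply (ex_RInt_continuous (V := R_CompleteNormedModule)). intros; apply gs_cont. Qed.

Lemma J_deriv t : is_derive J t (gs t).
Proof.
  apply is_derive_RInt with (a := 0).
  - apply filter_forall. intro b. apply RInt_correct. apply gs_exRInt.
  - apply gs_cont.
Qed.

Lemma one_plus_sq_pos u : 0 < 1 + u * u.
Proof. nra. Qed.

Lemma fK_derive t u : is_derive (fun z => fK z u) t (- gs t * (t * gs (t * u + 0))).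
Proof.
  unfold fK, gs.
  assert (Hu := one_plus_sq_pos u).
  auto_derive.
  - lra.
  - change R in t. change RinvImpl.Rinv with Rinv. replace (- ((t * u + 0) * (t * u + 0)) / 2) with (- (t * t * (u * u)) / 2) by field.
    replace (- exp (- (t * t) / 2) * (t * exp (- (t * t * (u * u)) / 2)))
      with (- t * (exp (- (t * t) / 2) * exp (- (t * t * (u * u)) / 2))) by field.
    rewrite <- exp_plus.
    replace (- (t * t) / 2 + - (t * t * (u * u)) / 2) with (- (t * t * (1 + u * u)) / 2) by field.
    unfold Rdiv. field. lra.
Qed.

Definition dK (t u : R) := - t * exp (- (t * t * (1 + u * u)) / 2).

Lemma fK_d t u : is_derive (fun z => fK z u) t (dK t u).
Proof.
  unfold fK, dK. assert (Hu := one_plus_sq_pos u).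
  auto_derive.
  - lra.
  - change R in t. change RinvImpl.Rinv with Rinv. unfold Rdiv. field. lra.
Qed.

Lemma dK_eq t u : dK t u = - gs t * (t * gs (t * u + 0)).
Proof.
  unfold dK, gs.
  replace (- exp (- (t * t) / 2) * (t * exp (- ((t * u + 0) * (t * u + 0)) / 2)))
    with (- t * (exp (- (t * t) / 2) * exp (- ((t * u + 0) * (t * u + 0)) / 2))) by ring.
  rewrite <- exp_plus. f_equal. f_equal. field.
Qed.

Lemma Derive_fK t u : Derive (fun z => fK z u) t = dK t u.
Proof. apply is_derive_unique. apply fK_d. Qed.

Lemma dK_cont t u : continuity_2d_pt dK t u.
Proof.
  unfold dK.
  apply continuity_2d_pt_mult.
  - apply continuity_2d_pt_opp. apply continuity_2d_pt_id1.
  - apply continuity_1d_2d_pt_comp with (f := exp) (g := fun a v => - (a * a * (1 + v * v)) / 2).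
    + apply derivable_continuous_pt. apply derivable_pt_exp.
    + apply continuity_2d_pt_ext with (f := fun a v => (- (a * a * (1 + v * v))) * (/ 2)).
      { intros; unfold Rdiv; reflexivity. }
      apply continuity_2d_pt_mult; [|apply continuity_2d_pt_const].
      apply continuity_2d_pt_opp.
      apply continuity_2d_pt_mult.
      * apply continuity_2d_pt_mult; apply continuity_2d_pt_id1.
      * apply continuity_2d_pt_plus; [apply continuity_2d_pt_const|].
        apply continuity_2d_pt_mult; apply continuity_2d_pt_id2.
Qed.

Lemma fK_exRInt y a b : ex_RInt (fK y) a b.
Proof.
  apply (ex_RInt_continuous (V := R_CompleteNormedModule)). intros z _.
  apply (ex_derive_continuous (K := R_AbsRing) (V := R_NormedModule)).
  unfold fK. auto_derive. assert (Hz := one_plus_sq_pos z). lra.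
Qed.

Lemma K_deriv t : is_derive K t (- gs t * J t).
Proof.
  assert (H : is_derive K t (RInt (fun u => Derive (fun z => fK z u) t) 0 1)).
  { unfold K. apply (is_derive_RInt_param fK 0 1 t).
    - apply filter_forall. intros x u _. eexists. apply fK_d.
    - intros u _. apply continuity_2d_pt_ext with (f := dK).
      { intros; symmetry; apply Derive_fK. }
      apply dK_cont.
    - apply filter_forall. intros y. apply fK_exRInt. }
  replace (- gs t * J t) with (RInt (fun u => Derive (fun z => fK z u) t) 0 1).
  exact H.
  rewrite (RInt_ext _ (fun u => scal (- gs t) (scal t (gs (t * u + 0))))).
  2:{ intros x _. rewrite Derive_fK, dK_eq. reflexivity. }
  rewrite (RInt_scal (V := R_CompleteNormedModule)).
  2:{ apply (ex_RInt_ext (fun u => t * gs (t * u + 0))). intros; reflexivity.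
      apply (ex_RInt_continuous (V := R_CompleteNormedModule)). intros z _.
      apply (ex_derive_continuous (K := R_AbsRing) (V := R_NormedModule)).
      unfold gs. auto_derive. exact I. }
  rewrite (RInt_comp_lin (V := R_CompleteNormedModule)).
  2:{ apply gs_exRInt. }
  unfold J. change (scal (- gs t) (RInt gs (t * 0 + 0) (t * 1 + 0)) = - gs t * RInt gs 0 t). rewrite Rmult_0_r, Rplus_0_r, Rmult_1_r, Rplus_0_r.
  reflexivity.
Qed.

Lemma H_const t : J t * J t + 2 * K t = J 0 * J 0 + 2 * K 0.
Proof.
  apply (const_of_d0 (fun t => J t * J t + 2 * K t)).
  intro x.
  assert (HJ := proj1 (is_derive_Reals _ _ _) (J_deriv x)).
  assert (HK := proj1 (is_derive_Reals _ _ _) (K_deriv x)).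
  replace 0 with (gs x * J x + J x * gs x + (0 * K x + 2 * (- gs x * J x))) by ring.
  apply derivable_pt_lim_plus.
  - apply derivable_pt_lim_mult; assumption.
  - apply derivable_pt_lim_mult; [apply derivable_pt_lim_const|assumption].
Qed.

Lemma J0 : J 0 = 0.
Proof. unfold J. apply (RInt_point (V := R_CompleteNormedModule)). Qed.

Lemma K0 : K 0 = PI / 4.
Proof.
  unfold K.
  rewrite (RInt_ext _ (fun u => / (1 + u ^ 2))).
  2:{ intros x _. unfold fK. replace (- (0 * 0 * (1 + x * x)) / 2) with 0 by field.
      rewrite exp_0. unfold Rdiv. rewrite Rmult_1_l. f_equal. ring. }
  rewrite <- atan_1. replace (atan 1) with (atan 1 - atan 0) by (rewrite atan_0; ring).
  apply is_RInt_unique.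
  apply (is_RInt_derive (V := R_CompleteNormedModule) atan).
  - intros x _. apply is_derive_Reals. apply derivable_pt_lim_atan.
  - intros x _. apply (ex_derive_continuous (K := R_AbsRing) (V := R_NormedModule)).
    auto_derive. assert (0 <= x * x) by nra. lra.
Qed.

Lemma K_ge0 t : 0 <= K t.
Proof.
  unfold K. apply RInt_ge_0; [lra|apply fK_exRInt|].
  intros x _. unfold fK. apply Rlt_le. apply Rdiv_lt_0_compat.
  apply exp_pos. apply one_plus_sq_pos.
Qed.

Lemma J_sq t : J t * J t <= PI / 2.
Proof.
  assert (H := H_const t). rewrite J0, K0 in H. assert (Hk := K_ge0 t). lra.
Qed.

Lemma Phi_half (Phi : R -> R) : is_std_normal_cdf Phi -> Phi 0 <= 1 / 2.
Proof.
  intros [HD HL].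
  assert (hpi : 0 < 2 * PI) by (assert (H := PI_RGT_0); lra).
  set (c := sqrt (2 * PI)).
  assert (hc : 0 < c) by (apply sqrt_lt_R0; exact hpi).
  assert (hc2 : c * c = 2 * PI) by (apply sqrt_sqrt; lra).
  assert (E : forall t, Phi t - J t / c = Phi 0 - J 0 / c).
  { intro t. apply (const_of_d0 (fun t => Phi t - J t / c)). intro x.
    replace 0 with (std_normal_pdf x - gs x * / c).
    2:{ unfold std_normal_pdf, gs. replace (x ^ 2) with (x * x) by ring. unfold c. field. apply Rgt_not_eq. apply sqrt_lt_R0. exact hpi. }
    apply derivable_pt_lim_minus; [apply HD|].
    unfold Rdiv. apply derivable_pt_lim_scal_right.
    apply is_derive_Reals. apply J_deriv. }
  assert (S : forall t, Phi t + Phi (- t) = Phi 0 + Phi (- 0)).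
  { intro t. apply (const_of_d0 (fun t => Phi t + Phi (- t))). intro x.
    replace 0 with (std_normal_pdf x + std_normal_pdf (- x) * (- 1)).
    2:{ unfold std_normal_pdf. replace ((- x) ^ 2) with (x ^ 2) by ring. ring. }
    apply derivable_pt_lim_plus; [apply HD|].
    apply (derivable_pt_lim_comp Ropp Phi x (-1)).
    - apply is_derive_Reals. auto_derive; [exact I|]. ring.
    - apply HD. }
  rewrite Ropp_0 in S.
  assert (B : forall t, Phi t - Phi 0 <= 1 / 2).
  { intro t. assert (Et := E t). rewrite J0 in Et.
    assert (Jt := J_sq t).
    assert (J t <= c / 2).
    { assert ((c / 2) * (c / 2) = PI / 2).
      { replace ((c / 2) * (c / 2)) with ((c * c) / 4) by field. rewrite hc2. field. }
      nra. }
    assert (J t / c <= 1 / 2).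
    { apply (Rmult_le_reg_r c); [exact hc|]. field_simplify; [|lra]. lra. }
    unfold Rdiv in *. lra. }
  apply Rnot_lt_le. intro hlt.
  set (eps := Phi 0 - 1 / 2).
  destruct (HL eps ltac:(unfold eps; lra)) as [M HM].
  set (t := Rabs M + 1).
  assert (ht : - t < M) by (unfold t; assert (- M <= Rabs M) by apply Rabs_maj2; lra).
  specialize (HM (- t) ht). apply Rabs_def2 in HM.
  assert (Bt := B t). assert (St := S t). unfold eps in HM. lra.
Qed.

Lemma z_pos (Phi : R -> R) (a z : R) : is_std_normal_cdf Phi -> 0 < a < 1 / 2 ->
  is_upper_quantile Phi a z -> 0 < z.
Proof.
  intros HP ha hq. unfold is_upper_quantile in hq.
  assert (h0 := Phi_half Phi HP).
  apply Rnot_le_lt. intro hz.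
  assert (Phi z <= Phi 0).
  { apply (mono_of_d Phi std_normal_pdf).
    - apply (proj1 HP).
    - intro x. unfold std_normal_pdf. apply Rlt_le. apply Rdiv_lt_0_compat.
      apply exp_pos. apply sqrt_lt_R0. assert (H := PI_RGT_0); lra.
    - exact hz. }
  lra.
Qed.

Theorem theorem1 (Phi : R -> R) (alpha beta za zb p1 p2 d1 d2 : R) :
  is_std_normal_cdf Phi ->
  0 < alpha < 1 / 2 -> 0 < beta < 1 / 2 ->
  is_upper_quantile Phi alpha za -> is_upper_quantile Phi beta zb ->
  0 < p1 < 1 / 2 -> 0 < p2 < 1 / 2 ->
  d1 < 0 -> d2 < 0 -> 0 < p1 + d1 -> 0 < p2 + d2 ->
  (forall r s,
     B_L p1 p2 d1 d2 <= r -> r < s -> s <= B_U p1 p2 d1 d2 ->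
     sample_size p1 p2 d1 d2 za zb r < sample_size p1 p2 d1 d2 za zb s) /\
  (forall r,
     B_L p1 p2 d1 d2 <= r -> r <= B_U p1 p2 d1 d2 ->
     sample_size p1 p2 d1 d2 za zb (B_L p1 p2 d1 d2) <= sample_size p1 p2 d1 d2 za zb r /\
     sample_size p1 p2 d1 d2 za zb r <= sample_size p1 p2 d1 d2 za zb (B_U p1 p2 d1 d2)).
Proof.
  intros HPhi Ha Hb Hqa Hqb Hp1 Hp2 Hd1 Hd2 HP1 HP2.
  assert (za_pos := z_pos Phi alpha za HPhi Ha Hqa).
  assert (zb_pos := z_pos Phi beta zb HPhi Hb Hqb).
  assert (Hz : za + zb <> 0) by lra.
  assert (M := mainB za zb p1 p2 d1 d2 Hz Hp1 Hp2 Hd1 Hd2 HP1 HP2).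
  split; [exact M|].
  intros r hL hU. split.
  - destruct (Rle_lt_or_eq_dec _ _ hL) as [h|h].
    + apply Rlt_le. apply M; lra.
    + rewrite h. lra.
  - destruct (Rle_lt_or_eq_dec _ _ hU) as [h|h].
    + apply Rlt_le. apply M; lra.
    + rewrite h. lra.
Qed.
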